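(* For every probability distribution on inputs of length $n$, every $p\in[0,1]$ and every $k\ge1$, there is a deterministic algorithm for Locate (which may depend on the distribution) that runs in $k$ rounds, asks at most $k\lceil pn\rceil^{1/k}$ queries, and succeeds with probability at least $p$ when the input is drawn from that distribution.
   Context: Locate problem in the rank query model: there is a vector $\vec{x}=(x_1,\ldots,x_n)$ whose ranks form a permutation of $\{1,\ldots,n\}$; an index $i$ is given and the goal is to output $\mathrm{rank}(x_i)$. Queries have the form ''How is $\mathrm{rank}(x_j)$ compared to $m$?'', with answer ''$<$'', ''$=$'' or ''$>$''. An algorithm runs in $k$ rounds if in each of $k$ rounds it submits a set of queries chosen depending only on answers of earlier rounds, then receives all answers. An input distribution is a distribution over rank permutations. *)

(* Defs.v *)
From HB Require Import structures.
From mathcomp Require Import all_boot all_order all_algebra all_fingroup.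
From mathcomp Require Import all_classical all_reals all_analysis.
Set Implicit Arguments.
Unset Strict Implicit.
Unset Printing Implicit Defensive.
Import Order.TTheory GRing.Theory Num.Theory.

(* Rank query model.  An input of length n is a rank permutation
   s : 'S_n ; rank(x_j) := (s j).+1 \in {1,..,n}. *)
Definition rank n (s : 'S_n) (j : 'I_n) : nat := (s j).+1.

Definition query n := ('I_n * nat)%type.
Definition answer n (s : 'S_n) (q : query n) : comparison :=
  Nat.compare (rank s q.1) q.2.

Definition transcript n := seq (seq (query n * comparison)).

(* A deterministic adaptive algorithm: the query set of round r is a function
   of (r and) the answers of the earlier rounds (the transcript), and the output
   is a function of the final transcript. *)
Record algo n := Algo {
  queries_of : nat -> transcript n -> seq (query n);
  output_of : transcript n -> nat }.

Fixpoint run n (A : algo n) (s : 'S_n) (r : nat) : transcript n :=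
  match r with
  | 0 => [::]
  | r'.+1 => let t := run A s r' in
             rcons t [seq (q, answer s q) | q <- queries_of A r' t]
  end.

Definition result n (A : algo n) (k : nat) (s : 'S_n) : nat :=
  output_of A (run A s k).

Definition num_queries n (A : algo n) (k : nat) (s : 'S_n) : nat :=
  sumn [seq size rd | rd <- run A s k].

(* Main.v *)
Require Import Defs.
From HB Require Import structures.
From mathcomp Require Import all_boot all_order all_algebra all_fingroup.
From mathcomp Require Import all_classical all_reals all_analysis.
From mathcomp Require Import zify ring lra.
Import Order.TTheory GRing.Theory Num.Theory.
Set Implicit Arguments.
Unset Strict Implicit.
Unset Printing Implicit Defensive.

Definition nLt (c : comparison) : bool := if c is Lt then false else true.

Lemma cmp_nLt (a c : nat) : nLt (Nat.compare a c) = (c <= a)%N.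
Proof.
case: (PeanoNat.Nat.compare_spec a c) => [->|/ssrnat.ltP H|/ssrnat.ltP H] /=.
- by rewrite leqnn.
- by rewrite leqNgt H.
- by rewrite ltnW.
Qed.

Definition digit n (rd : seq (query n * comparison)) : nat :=
  count (fun qa => nLt qa.2) rd.
Definition dec n (B : nat) (t : transcript n) : nat :=
  foldl (fun acc rd => acc * B + digit rd)%N 0%N t.
Definition gfun (L : seq nat) (n u : nat) : nat :=
  if (u < size L)%N then nth 0%N L u else (n + u)%N.

Definition qs n (i : 'I_n) L b k r (t : transcript n) : seq (query n) :=
  [seq (i, gfun L n (dec b.+1 t * b.+1 ^ (k - r) + j * b.+1 ^ (k - r.+1))%N)
  | j <- iota 1 b].

Definition myalgo n (i : 'I_n) L b k : algo n :=
  Algo (qs i L b k) (fun t => gfun L n (dec b.+1 t)).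

Lemma g_mono L n : sorted ltn L -> all (fun x => x <= n)%N L ->
  {homo gfun L n : u v / (u < v)%N}.
Proof.
move=> sL aL u v uv; rewrite /gfun.
case: ifP => hu; case: ifP => hv.
- by apply: (sorted_ltn_nth ltn_trans 0%N sL).
- have /= := (allP aL) _ (mem_nth 0%N hu). lia.
- lia.
- lia.
Qed.

Lemma count_le c b : count (fun j => j <= c)%N (iota 1 b) = minn c b.
Proof.
elim: b => [|b IH]; first by rewrite /= minn0.
rewrite -[b.+1]addn1 iotaD count_cat IH /= add1n. lia.
Qed.

Lemma nq_run n (i : 'I_n) L b k (s : 'S_n) r :
  sumn [seq size rd | rd <- run (myalgo i L b k) s r] = (r * b)%N.
Proof.
elim: r => [|r IH] //=.
by rewrite map_rcons sumn_rcons IH !size_map size_iota mulSn addnC.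
Qed.

Lemma size_run n (A : algo n) s r : size (run A s r) = r.
Proof. by elim: r => //= r IH; rewrite size_rcons IH. Qed.

Lemma inv_run n (i : 'I_n) L b k (s : 'S_n) t0 :
  sorted ltn L -> all (fun x => x <= n)%N L ->
  (t0 < b.+1 ^ k)%N -> rank s i = gfun L n t0 ->
  forall r, (r <= k)%N -> dec b.+1 (run (myalgo i L b k) s r) = (t0 %/ b.+1 ^ (k - r))%N.
Proof.
move=> sL aL ht0 hr; elim=> [|r IH] hrk.
  by rewrite /= subn0 divn_small.
rewrite /= /dec foldl_rcons -/(dec _ _) /digit count_map /qs count_map.
rewrite IH; last by apply: ltnW.
set B := b.+1.
have ekr : (k - r = (k - r.+1).+1)%N by lia.
set w := (B ^ (k - r.+1))%N.
have wpos : (0 < w)%N by rewrite expn_gt0.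
have eW : (B ^ (k - r) = B * w)%N by rewrite ekr expnS.
rewrite eW.
rewrite (@eq_count _ _ (fun j => j <= (t0 %% (B * w)) %/ w)%N); last first.
  move=> j /=.
  change (nLt (Nat.compare (rank s i) (gfun L n (t0 %/ (B * w) * (B * w) + j * w))) = (j <= (t0 %% (B * w)) %/ w)%N).
  rewrite cmp_nLt hr (leq_mono (g_mono sL aL)).
  by rewrite {2}(divn_eq t0 (B * w)) leq_add2l leq_divRL.
rewrite count_le.
have hc : ((t0 %% (B * w)) %/ w < B)%N.
  by rewrite ltn_divLR // mulnC ltn_pmod // muln_gt0 wpos.
rewrite (minn_idPl _); last by rewrite -ltnS.
by rewrite -modn_divl [(B * w)%N]mulnC divnMA -divn_eq.
Qed.

Lemma exists_card (T : finType) m : (m <= #|T|)%N -> exists S : {set T}, #|S| = m.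
Proof.
elim: m => [|m IH] hm; first by exists finset.set0; rewrite cards0.
have [S hS] := IH (ltnW hm).
have : (0 < #|~: S|)%N by have := cardsC S; lia.
case/card_gt0P => x; rewrite finset.in_setC => hx.
by exists (x |: S); rewrite cardsU1 hx hS.
Qed.

Lemma exists_root m k : (0 < k)%N -> exists b, (b ^ k <= m < b.+1 ^ k)%N.
Proof.
move=> kpos; elim: m => [|m [b /andP [h1 h2]]].
  by exists 0%N; rewrite exp0n // expn_gt0.
case: (ltnP m.+1 (b.+1 ^ k)) => h3.
  by exists b; rewrite h3 andbT; lia.
exists b.+1; have : (b.+1 ^ k < b.+2 ^ k)%N by rewrite ltn_exp2r.
lia.
Qed.

Local Open Scope ring_scope.

Lemma top_set (R : realType) (T : finType) (q : T -> R) (m : nat) :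
  (m <= #|T|)%N ->
  exists S : {set T}, #|S| = m /\
    m%:R * \sum_x q x <= #|T|%:R * \sum_(x in S) q x.
Proof.
move=> hm; have [S0 hS0] := exists_card hm.
pose w (S : {set T}) := \sum_(x in S) q x.
have P0 : (fun S : {set T} => #|S| == m) S0 by rewrite /= hS0.
case: (@arg_maxP _ _ _ S0 (fun S : {set T} => #|S| == m) w P0) => S /eqP hS hmax.
exists S; split => //.
have swap : forall x y, x \in S -> y \notin S -> q y <= q x.
  move=> x y xS yS.
  have yS' : y \notin S :\ x by rewrite finset.in_setD1 negb_and yS orbT.
  have := hmax (y |: (S :\ x)).
  rewrite /w big_setU1 //= (big_setD1 x xS) /= lerD2r; apply.
  by rewrite cardsU1 yS' -hS (cardsD1 x S) xS.
have dbl : \sum_(x in S) \sum_(y in ~: S) q y <= \sum_(x in S) \sum_(y in ~: S) q x.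
  apply: ler_sum => x xS; apply: ler_sum => y; rewrite finset.in_setC; exact: swap.
have e1 : \sum_(x in S) \sum_(y in ~: S) q y = (\sum_(y in ~: S) q y) *+ #|S|.
  exact: sumr_const.
have e2 : \sum_(x in S) \sum_(y in ~: S) q x = (\sum_(x in S) q x) *+ #|~: S|.
  rewrite -sumrMnl; apply: eq_bigr => x _; exact: sumr_const.
rewrite e1 e2 in dbl.
have hC : #|~: S| = (#|T| - m)%N by rewrite -(cardsC S) hS addKn.
rewrite hC hS in dbl.
rewrite -[_ *+ m]mulr_natr -[_ *+ (#|T| - m)%N]mulr_natr natrB // in dbl.
rewrite (bigID (mem S)) /=.
have -> : \sum_(i | i \notin S) q i = \sum_(i in ~: S) q i.
  by apply: eq_bigl => x; rewrite finset.in_setC.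
set a := \sum_(i in S) q i in dbl *; set c := \sum_(i in ~: S) q i in dbl *.
have -> : #|T|%:R * a = a * (#|T|%:R - m%:R) + m%:R * a by ring.
by rewrite mulrDr [m%:R * a + _]addrC lerD2r mulrC.
Qed.

Unset Implicit Arguments.
Set Strict Implicit.

Theorem proposition6 (R : realType) (n : nat) (D : {ffun 'S_n -> R})
    (p : R) (k : nat) (i : 'I_n) :
  (forall s, 0 <= D s) -> \sum_(s : 'S_n) D s = 1 ->
  0 <= p <= 1 -> (0 < k)%N ->
  exists A : algo n,
    (forall s : 'S_n, (num_queries A k s)%:R <=
        k%:R * @powR R ((Num.ceil (p * n%:R))%:~R) (k%:R^-1)) /\
    p <= \sum_(s : 'S_n | result A k s == rank s i) D s.
Proof.
move=> D0 D1 /andP[p0 p1] kpos.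
have npos : (0 < n)%N := leq_ltn_trans (leq0n i) (ltn_ord i).
set z := Num.ceil (p * n%:R).
have pn0 : 0 <= p * n%:R by rewrite mulr_ge0.
have z0 : (0 <= z)%R by rewrite /z ceil_ge0; lra.
pose m := `|z|%N.
have zm : z = m%:Z by rewrite /m gez0_abs.
have ezm : z%:~R = m%:R :> R by rewrite zm.
have pm : p * n%:R <= m%:R by rewrite -ezm ceil_ge.
have mn : (m <= n)%N.
  have : (z <= n%:Z)%R by rewrite /z ceil_le_int ler_piMl.
  by rewrite zm lez_nat.
have [b /andP[hb1 hb2]] := exists_root m kpos.
pose q (v : 'I_n) := \sum_(s : 'S_n | s i == v) D s.
have hmT : (m <= #|'I_n|)%N by rewrite card_ord.
have [S [hS hw]] := @top_set R _ q m hmT.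
pose L := sort leq [seq (val v).+1 | v <- enum S].
have sL : sorted ltn L.
  rewrite ltn_sorted_uniq_leq sort_uniq sort_sorted ?andbT; last exact: leq_total.
  rewrite map_inj_uniq ?enum_uniq //.
  by move=> x y [] /val_inj.
have aL : all (fun x => x <= n)%N L.
  by apply/allP => x; rewrite mem_sort => /mapP [v _ ->]; exact: ltn_ord.
have szL : size L = m by rewrite size_sort size_map -cardE hS.
exists (myalgo i L b k); split.
  move=> s; rewrite /num_queries nq_run ezm natrM ler_wpM2l //.
  have kR : k%:R != 0 :> R by rewrite pnatr_eq0 -lt0n.
  have -> : b%:R = (b%:R `^ k%:R) `^ k%:R^-1 :> R by rewrite -powRrM mulfV // powRr1.
  rewrite powR_mulrn // -natrX.
  apply: ge0_ler_powR; rewrite ?invr_ge0 ?nnegrE ?ler_nat //.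
have e1 : \sum_(s : 'S_n | s i \in S) D s = \sum_(v in S) q v.
  rewrite (partition_big (fun s : 'S_n => s i) (mem S)) //=.
  apply: eq_bigr => v vS; apply: eq_bigl => s.
  by case: eqP => [->|]; rewrite ?andbT ?andbF ?vS.
have e2 : \sum_v q v = 1.
  rewrite -D1 (partition_big (fun s : 'S_n => s i) xpredT) //.
have hpS : p <= \sum_(v in S) q v.
  rewrite e2 mulr1 card_ord in hw.
  rewrite -(ler_pM2r (_ : 0 < n%:R)) ?ltr0n //.
  by apply: (le_trans pm); rewrite mulrC.
apply: (le_trans hpS); rewrite -e1.
rewrite [X in _ <= X]big_mkcond [X in X <= _]big_mkcond /=; apply: ler_sum => s _.
case: ifP => sS; last by case: ifP.
have hin : rank s i \in L by rewrite mem_sort; apply: map_f; rewrite mem_enum.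
set t0 := index (rank s i) L.
have t0L : (t0 < size L)%N by rewrite index_mem.
have hg : rank s i = gfun L n t0 by rewrite /gfun t0L nth_index.
have ht0 : (t0 < b.+1 ^ k)%N by rewrite -szL in hb2; exact: ltn_trans t0L hb2.
have := inv_run sL aL ht0 hg (leqnn k); rewrite subnn expn0 divn1 => hd.
by rewrite /result /= hd -hg eqxx.
Qed.
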